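(* Let $f=c_{20}U_1^2+c_{11}U_1U_2+c_{02}U_2^2\in\mathbb C[U_1,U_2]$ with $c_{20},c_{11},c_{02}\in\mathbb C$. If $\mathcal L(f^m)=0$ for all $m\ge1$, then $f=0$.
   Context: $\mathcal L:\mathbb C[U_1,U_2]\to\mathbb C$ is the $\mathbb C$-linear map defined on monomials by $\mathcal L(U_1^{\ell_1}U_2^{\ell_2})=\ell_1!\,\ell_2!$. *)

(* Defs.v *)
From HB Require Import structures.
From mathcomp Require Import all_boot all_order all_algebra.
Set Implicit Arguments. Unset Strict Implicit. Unset Printing Implicit Defensive.
Import Order.TTheory GRing.Theory Num.Theory.
Local Open Scope ring_scope.

(* bivariate polynomials over R: coefficient of U1^i U2^j in p is (p`_j)`_i *)
Definition bipoly (R : nzRingType) := {poly {poly R}}.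

Definition U1 {R : nzRingType} : {poly {poly R}} := ('X)%:P.
Definition U2 {R : nzRingType} : {poly {poly R}} := 'X.
Definition bconst {R : nzRingType} (c : R) : {poly {poly R}} := (c%:P)%:P.

Definition Lfun {R : nzRingType} (p : {poly {poly R}}) : R :=
  \sum_(j < size p) \sum_(i < size p`_j) (p`_j)`_i * ((i`! * j`!)%N)%:R.

(* Main.v *)
Require Import Defs.
From Stdlib Require Import Ring ZArith Lia.
From HB Require Import structures.
From mathcomp Require Import all_boot all_order all_algebra.
Import Order.TTheory GRing.Theory Num.Theory.
Local Open Scope ring_scope.

Section S.
Variable C : numClosedFieldType.
Definition addC (x y : C) : C := x + y.
Definition mulC (x y : C) : C := x * y.
Definition oppC (x : C) : C := - x.
Definition subC (x y : C) : C := x - y.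
Definition zeroC : C := 0.
Definition oneC : C := 1.
Definition natC (n : nat) : C := n%:R.
Definition phiC (z : Z) : C := match z with Z0 => zeroC | Zpos p => natC (Pos.to_nat p) | Zneg p => oppC (natC (Pos.to_nat p)) end.

Lemma RTC : @ring_theory C zeroC oneC addC mulC subC oppC eq.
Proof.
constructor; rewrite /addC/mulC/subC/oppC/zeroC/oneC => *;
 [exact: add0r|exact: addrC|exact: addrA|exact: mul1r|exact: mulrC|exact: mulrA|exact: mulrDl|by []|exact: subrr].
Qed.

Lemma phiCE z : phiC z = (Z.to_nat z)%:R - (Z.to_nat (- z))%:R.
Proof.
case: z => [|p|p] /=; rewrite /zeroC/natC/oppC ?subr0 ?sub0r ?subrr //.
Qed.


Lemma natr_sub_eq (a b c d : nat) : (a + d = c + b)%N -> a%:R - b%:R = c%:R - d%:R :> C.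
Proof. by move=> h; apply/eqP; rewrite subr_eq eq_sym addrAC subr_eq -!natrD h. Qed.

Lemma morphC : ring_morph zeroC oneC addC mulC subC oppC eq
   Z0 (Zpos xH) Z.add Z.mul Z.sub Z.opp Zeq_bool phiC.
Proof.
constructor; rewrite /addC/mulC/subC/oppC/zeroC/oneC => //.
- move=> x y; rewrite !phiCE addrACA -opprD -!natrD; apply: natr_sub_eq.
  unfold addn; lia.
- move=> x y; rewrite !phiCE opprB addrACA -opprD -!natrD; apply: natr_sub_eq.
  unfold addn; lia.
- move=> x y; rewrite !phiCE mulrBl !mulrBr -!natrM opprB addrACA -opprD -!natrD; apply: natr_sub_eq.
  unfold addn, muln; nia.
- move=> x; rewrite !phiCE opprB Z.opp_involutive //.
- move=> x y /Zeq_bool_eq -> //.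
Qed.

Ltac natC_cst t := match t with
  | natC ?n => let v := eval vm_compute in (Z.of_nat n) in constr:(v)
  | zeroC => constr:(Z0)
  | oneC => constr:(Zpos xH)
  | _ => constr:(NotConstant) end.
Add Ring RingC : RTC (morphism morphC, constants [natC_cst]).

Lemma addCE (x y : C) : x + y = addC x y. Proof. by []. Qed.
Lemma mulCE (x y : C) : x * y = mulC x y. Proof. by []. Qed.
Lemma oppCE (x : C) : - x = oppC x. Proof. by []. Qed.
Lemma zeroCE : 0 = zeroC. Proof. by []. Qed.
Lemma oneCE : 1 = oneC. Proof. by []. Qed.
Lemma natCE n : n%:R = natC n. Proof. by []. Qed.
Lemma natmulCE (x : C) n : x *+ n = mulC x (natC n). Proof. by rewrite /mulC/natC mulr_natr. Qed.
Lemma expCE (x : C) n : x ^+ n = iter n (mulC x) oneC.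
Proof. by elim: n => //= n <-; rewrite exprS. Qed.

Ltac ringC := rewrite ?expCE /= ?natCE ?natmulCE ?addCE ?mulCE ?oppCE ?zeroCE ?oneCE; ring.


Local Notation P := {poly {poly C}}.

Lemma sum_widen (n K : nat) (F : nat -> C) : (n <= K)%N ->
  (forall i, (n <= i)%N -> F i = 0) -> \sum_(i < n) F i = \sum_(i < K) F i.
Proof.
move=> nK Fz; rewrite (big_ord_widen K F nK) big_mkcond; apply: eq_bigr => i _.
by case: ifP => // /negbT; rewrite -leqNgt => /Fz ->.
Qed.

Lemma sum_single (K j : nat) (F : nat -> C) : (j < K)%N ->
  (forall i, i != j -> F i = 0) -> \sum_(i < K) F i = F j.
Proof.
move=> jK Fz; rewrite (bigD1 (Ordinal jK)) //= big1 ?addr0 // => i ni.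
apply: Fz; apply: contra ni => /eqP ij; apply/eqP; exact: val_inj.
Qed.

Definition Lgen (K : nat) (p : P) : C :=
  \sum_(j < K) \sum_(i < K) (p`_j)`_i * ((i`! * j`!)%N)%:R.

Lemma LfunE (p : P) K : (size p <= K)%N -> (forall j, leq (size p`_j) K) ->
  Lfun p = Lgen K p.
Proof.
move=> sK sjK; rewrite /Lfun /Lgen.
rewrite (@sum_widen _ K (fun j => \sum_(i < size p`_j) (p`_j)`_i * ((i`! * j`!)%N)%:R)) //.
  apply: eq_bigr => j _; apply: (@sum_widen _ K (fun i => (p`_j)`_i * ((i`! * j`!)%N)%:R)) => // i hi.
  by rewrite nth_default // mul0r.
by move=> j hj; rewrite nth_default // size_poly0 big_ord0.
Qed.

Definition bnd (p : P) : nat := addn (size p) (\big[maxn/0%N]_(j < size p) size p`_j).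

Lemma bndP (p : P) K : (bnd p <= K)%N ->
  (size p <= K)%N /\ (forall j, leq (size p`_j) K).
Proof.
rewrite /bnd => h; split; first exact: leq_trans (leq_addr _ _) h.
move=> j; case: (ltnP j (size p)) => hj.
  apply: leq_trans h; apply: leq_trans (leq_addl _ _).
  exact: (@leq_bigmax _ (fun j : 'I_(size p) => size p`_j) (Ordinal hj)).
by rewrite nth_default // size_poly0.
Qed.

Lemma Lfun_gen (p : P) K : (bnd p <= K)%N -> Lfun p = Lgen K p.
Proof. by case/bndP=> h1 h2; apply: LfunE. Qed.

Lemma LfunD (p q : P) : Lfun (p + q) = Lfun p + Lfun q.
Proof.
set K := (bnd p + bnd q + bnd (p + q))%N.
have h1 : (bnd p <= K)%N by rewrite /K -addnA leq_addr.
have h2 : (bnd q <= K)%N by rewrite /K -addnA addnCA leq_addr.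
have h3 : (bnd (p + q) <= K)%N by rewrite /K leq_addl.
rewrite (@Lfun_gen p K h1) (@Lfun_gen q K h2) (@Lfun_gen (p+q) K h3).
rewrite /Lgen -big_split; apply: eq_bigr => j _; rewrite -big_split; apply: eq_bigr => i _.
by rewrite !coefD mulrDl.
Qed.

Lemma Lfun0 : Lfun (0 : P) = 0.
Proof. by rewrite /Lfun size_poly0 big_ord0. Qed.

Definition mon (i j : nat) : P := U1 ^+ i * U2 ^+ j.

Lemma bmonE (k : C) i j : bconst k * mon i j = (k%:P * 'X^i)%:P * 'X^j.
Proof. by rewrite /bconst /mon /U1 /U2 mulrA -rmorphXn /= -polyCM. Qed.

Lemma Lfun_mon (k : C) i j : Lfun (bconst k * mon i j) = k * ((i`! * j`!)%N)%:R.
Proof.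
set K := (bnd (bconst k * mon i j) + i.+1 + j.+1)%N.
have hK : (bnd (bconst k * mon i j) <= K)%N by rewrite /K -addnA leq_addr.
have hj : (j < K)%N by rewrite /K; apply/ssrnat.leP; unfold addn; lia.
have hi : (i < K)%N by rewrite /K; apply/ssrnat.leP; unfold addn; lia.
rewrite (@Lfun_gen _ K hK) /Lgen bmonE.
set q := (k%:P * 'X^i).
rewrite (@sum_single K j (fun j0 => \sum_(i0 < K) ((q%:P * 'X^j)`_j0)`_i0 * ((i0`! * j0`!)%N)%:R)) //; last first.
  move=> j' nj; rewrite big1 // => i' _; rewrite coefMXn.
  case: ifP => hlt; first by rewrite coef0 mul0r.
  rewrite coefC; case: ifP; last by rewrite coef0 mul0r.
  by rewrite subn_eq0 => hle; case/negP: nj; rewrite eqn_leq hle leqNgt hlt.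
rewrite (@sum_single K i (fun i0 => ((q%:P * 'X^j)`_j)`_i0 * ((i0`! * j`!)%N)%:R)) //; last first.
  move=> i' ni; rewrite coefMXn ltnn subnn coefC eqxx /q coefCM coefXn.
  by rewrite (negbTE ni) mulr0 mul0r.
by rewrite coefMXn ltnn subnn coefC eqxx /q coefCM coefXn eqxx mulr1.
Qed.

Definition lin (s : seq (C * nat * nat)) : P :=
  \sum_(t <- s) bconst t.1.1 * mon t.1.2 t.2.

Lemma Lfun_lin s : Lfun (lin s) = \sum_(t <- s) t.1.1 * ((t.1.2`! * t.2`!)%N)%:R.
Proof.
elim: s => [|t s IH]; first by rewrite /lin !big_nil Lfun0.
by rewrite /lin !big_cons LfunD Lfun_mon -IH.
Qed.

Lemma bmonM (a b : C) i j k l :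
  (bconst a * mon i j) * (bconst b * mon k l) = bconst (a * b) * mon (i + k) (j + l).
Proof.
rewrite mulrACA /bconst /mon !polyCM; congr (_ * _).
by rewrite mulrACA -!exprD.
Qed.

Definition mulT (x y : C * nat * nat) : C * nat * nat :=
  (x.1.1 * y.1.1, (x.1.2 + y.1.2)%N, (x.2 + y.2)%N).

Lemma linM s t : lin s * lin t = lin [seq mulT x y | x <- s, y <- t].
Proof.
rewrite /lin big_allpairs_dep mulr_suml; apply: eq_bigr => x _.
rewrite mulr_sumr; apply: eq_bigr => y _.
by rewrite bmonM.
Qed.

Lemma key (a c : C) : 2 * a ^+ 2 - a * c + 2 * c ^+ 2 = 0 -> a * c * (a + c) = 0 ->
  a = 0 /\ c = 0.
Proof.
move=> hq; have h2 : (2 : C) != 0 by rewrite pnatr_eq0.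
have h5 : (5 : C) != 0 by rewrite pnatr_eq0.
move/eqP; rewrite !mulf_eq0 => /orP [/orP [] /eqP ha | hac].
- move: hq; rewrite ha => hq.
  have : 2 * (c * c) = 0 by rewrite -hq; ringC.
  by move/eqP; rewrite !mulf_eq0 (negbTE h2) orbb /= => /eqP.
- move: hq; rewrite ha => hq.
  have : 2 * (a * a) = 0 by rewrite -hq; ringC.
  by move/eqP; rewrite !mulf_eq0 (negbTE h2) orbb /= => /eqP.
- have ha : a = - c by apply/eqP; rewrite -subr_eq0 opprK.
  move: hq; rewrite ha => hq.
  have : 5 * (c * c) = 0 by rewrite -hq; ringC.
  by move/eqP; rewrite !mulf_eq0 (negbTE h5) orbb /= => /eqP ->; rewrite oppr0.
Qed.

Lemma final (a b c : C) :
  let fs := [:: (a, 2%N, 0%N); (b, 1%N, 1%N); (c, 0%N, 2%N)] in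
  Lfun (lin fs) = 0 -> Lfun (lin fs * lin fs) = 0 ->
  Lfun (lin fs * lin fs * lin fs) = 0 -> [/\ a = 0, b = 0 & c = 0].
Proof.
move=> fs E1 E2 E3.
rewrite Lfun_lin /fs /= !big_cons big_nil in E1.
rewrite linM Lfun_lin /fs /= !big_cons big_nil /mulT /= in E2.
rewrite !linM Lfun_lin /fs /= !big_cons big_nil /mulT /= in E3.
have eb : b = - (2 * a) - 2 * c.
  apply/eqP; rewrite -subr_eq0; apply/eqP; rewrite -E1; ringC.
subst b.
have h8 : (8 : C) != 0 by rewrite pnatr_eq0.
have h144 : (144 : C) != 0 by rewrite pnatr_eq0.
have h2 : (2 : C) != 0 by rewrite pnatr_eq0.
have hq : 2 * a ^+ 2 - a * c + 2 * c ^+ 2 = 0.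
  have : 8 * (2 * a ^+ 2 - a * c + 2 * c ^+ 2) = 0 by rewrite -E2; ringC.
  by move/eqP; rewrite mulf_eq0 (negbTE h8) /= => /eqP.
have hr : 2 * a ^+ 3 - a ^+ 2 * c - a * c ^+ 2 + 2 * c ^+ 3 = 0.
  have : 144 * (2 * a ^+ 3 - a ^+ 2 * c - a * c ^+ 2 + 2 * c ^+ 3) = 0 by rewrite -E3; ringC.
  by move/eqP; rewrite mulf_eq0 (negbTE h144) /= => /eqP.
have hac : a * c * (a + c) = 0.
  have : 2 * (a * c * (a + c)) = (a + c) * (2 * a ^+ 2 - a * c + 2 * c ^+ 2)
     - (2 * a ^+ 3 - a ^+ 2 * c - a * c ^+ 2 + 2 * c ^+ 3) by ringC.
  rewrite hq hr mulr0 subr0 => /eqP; rewrite mulf_eq0 (negbTE h2) /= => /eqP //.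
have [-> ->] := @key a c hq hac.
by split => //; rewrite !mulr0 oppr0 addr0.
Qed.

End S.

Theorem proposition4p14 (C : numClosedFieldType) (c20 c11 c02 : C) :
  let f : {poly {poly C}} :=
    bconst c20 * U1 ^+ 2 + bconst c11 * (U1 * U2) + bconst c02 * U2 ^+ 2 in
  (forall m : nat, (1 <= m)%N -> Lfun (f ^+ m) = 0) -> f = 0.
Proof.
move=> f H.
set fs := [:: (c20, 2%N, 0%N); (c11, 1%N, 1%N); (c02, 0%N, 2%N)].
have fE : f = @lin C fs.
  rewrite /f /lin /fs !big_cons big_nil addr0 /mon /= expr0 mulr1 mul1r !expr1 addrA.
  done.
have E1 : Lfun (lin C fs) = 0 by rewrite -fE -(expr1 f); exact: H.
have E2 : Lfun (lin C fs * lin C fs) = 0 by rewrite -fE -expr2; exact: H.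
have E3 : Lfun (lin C fs * lin C fs * lin C fs) = 0 by rewrite -fE -expr2 -exprSr; exact: H.
have [ha hb hc] := @final C c20 c11 c02 E1 E2 E3.
by rewrite /f ha hb hc /bconst !polyC0 !mul0r !addr0.
Qed.
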